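(* Let $D$ be a Euclidean domain with fraction field $K$, and let $R$ be the subring of $K$ generated by $\{1/d \mid d \in D\setminus\{0\}\}$. If $D \not\subseteq R$ (equivalently, $R \neq K$), then $R \cap D$ equals the set of units of $D$ together with $0$. In particular, the units of $D$ together with $0$ form a field contained in $D$.
   Context: A Euclidean function on an integral domain $D$ is a function $f: D\setminus\{0\} \to \mathbb{Z}$ such that for all nonzero $a,b \in D$: (1) $f(ab) \geq f(a)$, and (2) there exist $q,r \in D$ with $b = aq + r$ and either $r=0$ or $f(r) < f(a)$. A Euclidean domain is an integral domain admitting a Euclidean function. *)

(* Defs.v *)
From HB Require Import structures.
From mathcomp Require Import all_boot all_order all_algebra.
From mathcomp Require Import fraction.
Set Implicit Arguments. Unset Strict Implicit. Unset Printing Implicit Defensive.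
Import Order.TTheory GRing.Theory Num.Theory.
Local Open Scope ring_scope.

Definition euclidean_function (D : idomainType) (f : D -> int) : Prop :=
  forall a b : D, a != 0 -> b != 0 ->
    f a <= f (a * b) /\
    exists q r : D, b = a * q + r /\ (r = 0 \/ f r < f a).

Definition euclidean_domain (D : idomainType) : Prop :=
  exists f : D -> int, euclidean_function f.

Definition is_subring (K : pzRingType) (S : K -> Prop) : Prop :=
  [/\ S 1, (forall x y, S x -> S y -> S (x - y)) &
      (forall x y, S x -> S y -> S (x * y))].

Definition gen_subring (K : pzRingType) (G : K -> Prop) : K -> Prop :=
  fun x => forall S : K -> Prop, is_subring S -> (forall y, G y -> S y) -> S x.

Definition frac_emb (D : idomainType) (d : D) : {fraction D} := FracField.tofrac d.

Definition inv_subring (D : idomainType) : {fraction D} -> Prop :=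
  gen_subring (fun y : {fraction D} =>
                 exists2 d : D, d != 0 & y = (frac_emb d)^-1).

(* Main.v *)
Require Import Defs.
From HB Require Import structures.
From mathcomp Require Import all_boot all_order all_algebra.
From mathcomp Require Import fraction.
From mathcomp Require Import zify.
Import Order.TTheory GRing.Theory Num.Theory.
Local Open Scope ring_scope.

Section Aux.
Variable D : idomainType.

Lemma inR_sub : is_subring (@inv_subring D).
Proof.
split.
- by move=> S [H1 _ _] _.
- move=> x y Hx Hy S HS HG; have [_ HB _] := HS; exact: HB (Hx S HS HG) (Hy S HS HG).
- move=> x y Hx Hy S HS HG; have [_ _ HM] := HS; exact: HM (Hx S HS HG) (Hy S HS HG).
Qed.

Lemma inR1 : @inv_subring D 1.
Proof. by case: inR_sub. Qed.
Lemma inRB (x y : {fraction D}) : inv_subring x -> inv_subring y -> inv_subring (x - y).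
Proof. by case: inR_sub => _ H _; apply: H. Qed.
Lemma inRM (x y : {fraction D}) : inv_subring x -> inv_subring y -> inv_subring (x * y).
Proof. by case: inR_sub => _ _ H; apply: H. Qed.
Lemma inR0 : @inv_subring D 0.
Proof. by rewrite -(subrr 1); apply: inRB; apply: inR1. Qed.
Lemma inRinv (d : D) : d != 0 -> inv_subring (frac_emb d)^-1.
Proof. by move=> Hd S _ HG; apply: HG; exists d. Qed.

Lemma inR_unit (u : D) : u \is a GRing.unit -> inv_subring (frac_emb u).
Proof.
move=> Hu.
have -> : frac_emb u = (frac_emb u^-1)^-1.
  by rewrite /frac_emb rmorphV // invrK.
apply: inRinv; rewrite invr_eq0; by apply: contraTneq Hu => ->; rewrite unitr0.
Qed.

Lemma inR_div (b q : D) : q != 0 -> inv_subring (frac_emb (b * q)) ->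
  inv_subring (frac_emb b).
Proof.
move=> Hq H.
have -> : frac_emb b = frac_emb (b * q) * (frac_emb q)^-1.
  by rewrite /frac_emb tofracM mulfK // tofrac_eq0.
by apply: inRM => //; apply: inRinv.
Qed.

Variable f : D -> int.
Hypothesis Hf : euclidean_function f.

Lemma f1_le b : b != 0 -> f 1 <= f b.
Proof. by move=> Hb; have [H _] := Hf 1 b (oner_neq0 D) Hb; rewrite mul1r in H. Qed.

Lemma f_strict y x : y != 0 -> x != 0 -> x \isn't a GRing.unit -> f y < f (y * x).
Proof.
move=> Hy Hx Hxu.
have Hyx : y * x != 0 by rewrite mulf_neq0.
have [_ [q [r [Hyr Hr]]]] := Hf (y * x) y Hyx Hy.
have H1 : 1 - x * q != 0.
  apply: contraNneq Hxu => /eqP; rewrite subr_eq0 => /eqP Hxq.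
  by apply/unitrP; exists q; split => //; rewrite mulrC.
have Hr' : r = y * (1 - x * q) by rewrite mulrBr mulr1 mulrA [X in X - _]Hyr addrAC subrr add0r.
case: Hr => Hr.
  by have := mulf_neq0 Hy H1; rewrite -Hr' Hr eqxx.
have [H _] := Hf y _ Hy H1; rewrite -Hr' in H.
exact: (le_lt_trans H Hr).
Qed.

Lemma f_pow x k : x != 0 -> x \isn't a GRing.unit -> f 1 + k%:Z <= f (x ^+ k).
Proof.
move=> Hx Hxu; elim: k => [|k IH]; first by rewrite expr0 addr0.
have Hk : x ^+ k != 0 by rewrite expf_neq0.
have := @f_strict (x ^+ k) x Hk Hx Hxu; rewrite -exprSr => H.
have : f 1 + k%:Z < f (x ^+ k.+1) by apply: le_lt_trans IH H.
lia.
Qed.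

Lemma all_in (x : D) : x != 0 -> x \isn't a GRing.unit -> inv_subring (frac_emb x) ->
  forall b : D, inv_subring (frac_emb b).
Proof.
move=> Hx Hxu HxR.
have HxkR : forall k, inv_subring (frac_emb (x ^+ k)).
  elim=> [|k IH]; first by rewrite expr0 /frac_emb tofrac1; apply: inR1.
  by rewrite exprS /frac_emb tofracM; apply: inRM.
suff H : forall n : nat, forall b, b != 0 -> f b < f 1 + n%:Z -> inv_subring (frac_emb b).
  move=> b; case: (eqVneq b 0) => [->|Hb]; first by rewrite /frac_emb tofrac0; apply: inR0.
  apply: (H (`|f b - f 1|%N).+1) => //; have := @f1_le b Hb; lia.
elim=> [|n IH] b Hb Hfb.
  have := @f1_le b Hb; lia.
pose k := `|f b - f 1|%N.
have Hs : x ^+ k != 0 by rewrite expf_neq0.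
have Hfs : f b <= f (x ^+ k).
  have := @f_pow x k Hx Hxu; have := @f1_le b Hb; rewrite /k.
  move=> H1 H2. set F := f (x ^+ _) in H2 *. clearbody F. lia.
have [_ [q [r [Hsr Hr]]]] := Hf b (x ^+ k) Hb Hs.
have HrR : inv_subring (frac_emb r).
  case: (eqVneq r 0) => [->|Hr0]; first by rewrite /frac_emb tofrac0; apply: inR0.
  case: Hr => [Hr|Hr]; first by rewrite Hr eqxx in Hr0.
  apply: IH => //; lia.
have HbqR : inv_subring (frac_emb (b * q)).
  have -> : b * q = x ^+ k - r by rewrite Hsr addrK.
  by rewrite /frac_emb tofracB; apply: inRB => //; apply: HxkR.
case: (eqVneq q 0) => [Hq|Hq]; last exact: inR_div Hq HbqR.
exfalso; rewrite Hq mulr0 add0r in Hsr.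
case: Hr => Hr; first by move: Hs; rewrite Hsr Hr eqxx.
rewrite -Hsr in Hr; lia.
Qed.

End Aux.

Theorem proposition2p11 (D : idomainType) :
  euclidean_domain D ->
  (exists d : D, ~ inv_subring (frac_emb d)) ->
  (forall d : D, inv_subring (frac_emb d) <-> (d \is a GRing.unit \/ d = 0)) /\
  (* in particular: units of D together with 0 form a field inside D *)
  (let F := fun d : D => d \is a GRing.unit \/ d = 0 in
   [/\ F 1, (forall x y, F x -> F y -> F (x - y)),
       (forall x y, F x -> F y -> F (x * y)) &
       (forall x, F x -> x != 0 -> F x^-1 /\ x * x^-1 = 1)]).
Proof.
move=> [f Hf] [d0 Hd0].
have Hin : forall d : D, inv_subring (frac_emb d) <-> (d \is a GRing.unit \/ d = 0).
  move=> d; split.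
    move=> Hd; case Hu: (d \is a GRing.unit); first by left.
    case: (eqVneq d 0) => [->|Hd0']; first by right.
    exfalso; apply: Hd0; apply: (@all_in D f Hf d Hd0') => //; by rewrite Hu.
  case=> [Hu|->]; first exact: inR_unit.
  by rewrite /frac_emb tofrac0; apply: inR0.
split => //.
have back : forall d : D, d \is a GRing.unit \/ d = 0 -> inv_subring (frac_emb d).
  by move=> d /Hin.
split.
- by left; apply: unitr1.
- move=> x y /back Hx /back Hy; apply/Hin.
  by rewrite /frac_emb tofracB; apply: inRB.
- move=> x y /back Hx /back Hy; apply/Hin.
  by rewrite /frac_emb tofracM; apply: inRM.
- move=> x [Hu|->] Hx; last by rewrite eqxx in Hx.
  by split; [left; rewrite unitrV | rewrite mulrV].
Qed.
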